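(* Let $(m,Q)$ be a deformation pair of the lattice polytope $P$. Then the map $\xi_{(m,Q)}:\widetilde M\to\widetilde M$, $\xi_{(m,Q)}(h)=h-\eta_Q(\pi_M(h))\,m$, maps the monoid $S_P$ bijectively onto the monoid $S_{P_{(m,Q)}}$, with inverse $\xi_{(-m,Q)}$.
   Context: $N\cong\mathbb{Z}^n$, $M$ dual, $\widetilde M=M\oplus\mathbb{Z}$ with projections $\pi_M,\pi_{\mathbb{Z}}$. For a lattice polytope $P$: $\sigma$ the cone generated by $\{(v,1):v\in P\}$, $S_P=\sigma^\vee\cap\widetilde M$. For a polytope $Q$ and $c\in M$, $\eta_Q(c)=-\min_{v\in Q}\langle v,c\rangle$. $\varphi_m(n)=\langle\pi_M(m),n\rangle+\pi_{\mathbb{Z}}(m)$. A deformation pair $(m,Q)$ of $P$: $m\in\widetilde M$, $Q\subset\{n:\langle\pi_M(m),n\rangle=0\}$ a lattice polytope such that $iQ$ is a Minkowski summand of $P\cap(\varphi_m=i)$ for all $i\in\mathbb{N}$ with nonempty slice. Laurent polynomials are normalized (coefficient $1$ at vertices of the Newton polytope $\Delta$); $f$ is $(m,g)$-mutable if $f=\sum_if_i$ with $f_i$ supported on $(\varphi_m=i)\cap N$ and $g^i\mid f_i$ for $i\ge0$, and $\operatorname{mut}^g_mf=\sum_if_i/g^i$. $P_{(m,Q)}:=\Delta(\operatorname{mut}^g_mf)$ for any $f,g$ with $\Delta(f)=P$, $\Delta(g)=Q$, $f$ $(m,g)$-mutable (such exist and the result does not depend on the choice). *)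

(* Defs.v *)
From HB Require Import structures.
From mathcomp Require Import all_boot all_order all_algebra.
From mathcomp Require Import finmap.
From mathcomp Require Import monalg.
From mathcomp Require Import reals.

Set Implicit Arguments.
Unset Strict Implicit.
Unset Printing Implicit Defensive.

Import Order.TTheory GRing.Theory Num.Theory.
Local Open Scope ring_scope.

(* N = Z^n and its dual M = Z^n, both represented by row vectors. *)
Definition Lat (n : nat) := 'rV[int]_n.
(* \tilde M = M (+) Z ; pi_M = fst, pi_Z = snd *)
Definition Mt (n : nat) := (Lat n * int)%type.

Definition dot n (u v : Lat n) : int := \sum_(i < n) u 0 i * v 0 i.
Definition dotR (R : realType) n (u : Lat n) (x : 'rV[R]_n) : R :=
  \sum_(i < n) (u 0 i)%:~R * x 0 i.
Definition emb (R : realType) n (v : Lat n) : 'rV[R]_n :=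
  map_mx (fun z : int => z%:~R) v.

Definition phi n (m : Mt n) (e : Lat n) : int := dot m.1 e + m.2.
Definition phiR (R : realType) n (m : Mt n) (x : 'rV[R]_n) : R :=
  dotR m.1 x + m.2%:~R.

Definition conv (R : realType) n (S : seq 'rV[R]_n) (x : 'rV[R]_n) : Prop :=
  exists lam : 'I_(size S) -> R,
    (forall j, 0 <= lam j) /\ \sum_j lam j = 1 /\
    x = \sum_j lam j *: S`_j.

Definition lconv (R : realType) n (V : seq (Lat n)) : 'rV[R]_n -> Prop :=
  conv [seq emb R v | v <- V].

Arguments lconv R {n} V _.

Definition is_polytope (R : realType) n (A : 'rV[R]_n -> Prop) : Prop :=
  exists S : seq 'rV[R]_n, S != [::] /\ forall x, A x <-> conv S x.

Definition minkowski_sum (R : realType) n (A B : 'rV[R]_n -> Prop) x : Prop :=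
  exists a b, A a /\ B b /\ x = a + b.

Definition dilate (R : realType) n (t : R) (A : 'rV[R]_n -> Prop) x : Prop :=
  exists a, A a /\ x = t *: a.

Definition is_minkowski_summand (R : realType) n (B A : 'rV[R]_n -> Prop) :=
  exists C, is_polytope C /\ forall x, A x <-> minkowski_sum C B x.

Definition slice (R : realType) n (A : 'rV[R]_n -> Prop) (m : Mt n) (i : int)
  (x : 'rV[R]_n) : Prop := A x /\ phiR m x = i%:~R.

Definition is_vertex (R : realType) n (A : 'rV[R]_n -> Prop) (x : 'rV[R]_n) :=
  A x /\ forall y z (t : R), A y -> A z -> 0 < t < 1 ->
    x = t *: y + (1 - t) *: z -> y = x /\ z = x.

(* ---------- Deformation pairs ----------
   P = lconv VP, Q = lconv VQ (lattice polytopes, VQ nonempty). *)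
Definition deformation_pair (R : realType) n (VP : seq (Lat n)) (m : Mt n)
  (VQ : seq (Lat n)) : Prop :=
  VQ != [::] /\
  (forall x, lconv R VQ x -> dotR m.1 x = 0) /\
  forall i : nat, (exists x, slice (lconv R VP) m i%:Z x) ->
    is_minkowski_summand (dilate i%:R (lconv R VQ)) (slice (lconv R VP) m i%:Z).

(* eta_Q(c) = - min_{v in Q} <v, c>; for Q = conv(VQ) the minimum of the
   linear form is attained on the generators VQ. *)
Definition eta n (VQ : seq (Lat n)) (c : Lat n) : int :=
  - \big[Num.min/dot (head 0 VQ) c]_(v <- VQ) dot v c.

Definition xi n (VQ : seq (Lat n)) (m : Mt n) (h : Mt n) : Mt n :=
  (h.1 - (eta VQ h.1) *: m.1, h.2 - eta VQ h.1 * m.2).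

Definition negm n (m : Mt n) : Mt n := (- m.1, - m.2).

Definition cone_of (R : realType) n (P : 'rV[R]_n -> Prop) (w : 'rV[R]_n * R)
  : Prop :=
  exists (k : nat) (lam : 'I_k -> R) (v : 'I_k -> 'rV[R]_n),
    (forall j, 0 <= lam j /\ P (v j)) /\
    w = (\sum_j lam j *: v j, \sum_j lam j).

Definition S_P (R : realType) n (P : 'rV[R]_n -> Prop) (h : Mt n) : Prop :=
  forall w, cone_of P w -> 0 <= dotR h.1 w.1 + h.2%:~R * w.2.

(* Laurent polynomials over K in n variables: finitely supported functions
   N -> K (exponent e <-> monomial x^e). *)
Definition lpoly (K : fieldType) n := {malg K[Lat n]}.

Definition lmul (K : fieldType) n (f g : lpoly K n) : lpoly K n :=
  \sum_(a <- msupp f) \sum_(b <- msupp g) << f@_a * g@_b *g (a + b) >>.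

Definition lone (K : fieldType) n : lpoly K n := << 1 *g 0 >>.

Definition lpow (K : fieldType) n (g : lpoly K n) (i : nat) : lpoly K n :=
  iter i (lmul g) (lone K n).

Definition Newton (R : realType) (K : fieldType) n (f : lpoly K n)
  : 'rV[R]_n -> Prop :=
  lconv R [seq e | e <- msupp f].

Arguments Newton R {K n} f _.

Definition normalized (R : realType) (K : fieldType) n (f : lpoly K n) :=
  forall e : Lat n, is_vertex (Newton R f) (emb R e) -> f@_e = 1.

Arguments normalized R {K n} f.

Definition lslice (K : fieldType) n (m : Mt n) (f : lpoly K n) (i : int)
  : lpoly K n :=
  \sum_(e <- msupp f | phi m e == i) << f@_e *g e >>.

(* f is (m,g)-mutable with mut^g_m f = f' : with f = sum_i f_i, there are
   h_i = f_i / g^i (g^i * h_i = f_i for i >= 0, h_i = f_i * g^{-i} for i < 0)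
   and f' = sum_i h_i. *)
Definition Mutation (K : fieldType) n (m : Mt n) (g f f' : lpoly K n) : Prop :=
  exists h : int -> lpoly K n,
    (forall i : int, 0 <= i -> lslice m f i = lmul (lpow g `|i|%N) (h i)) /\
    (forall i : int, i < 0 -> h i = lmul (lslice m f i) (lpow g `|i|%N)) /\
    f' = \sum_(i <- undup [seq phi m e | e <- msupp f]) h i.

(* Main.v *)
Require Import Defs.
From HB Require Import structures.
From mathcomp Require Import all_boot all_order all_algebra.
From mathcomp Require Import finmap.
From mathcomp Require Import monalg.
From mathcomp Require Import reals.
From mathcomp Require Import ring lra zify.

Set Implicit Arguments.
Unset Strict Implicit.
Unset Printing Implicit Defensive.
Import Order.TTheory GRing.Theory Num.Theory.
Local Open Scope ring_scope.

Fixpoint lexle (s t : seq int) : bool :=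
  match s, t with
  | x :: s', y :: t' => (x < y) || ((x == y) && lexle s' t')
  | _, _ => true
  end.

Fixpoint addS (s t : seq int) : seq int :=
  match s, t with
  | x :: s', y :: t' => (x + y) :: addS s' t'
  | _, _ => [::]
  end.

Lemma lexle_total s t : lexle s t || lexle t s.
Proof.
elim: s t => [|x s IH] [|y t] //=.
case: (ltgtP x y) => //= ->; rewrite eqxx /=; exact: IH.
Qed.

Lemma lexle_trans s t u : size s = size t -> size t = size u ->
  lexle s t -> lexle t u -> lexle s u.
Proof.
elim: s t u => [|x s IH] [|y t] [|z u] //= [st] [tu].
case/orP => [xy|/andP[/eqP -> st']]; case/orP => [yz|/andP[/eqP <- tu']].
- by rewrite (lt_trans xy yz).
- by rewrite xy.
- by rewrite yz.
- by rewrite eqxx (IH t u) // orbT.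
Qed.

Lemma lexle_sum s t s' t' : size s = size t -> size s' = size t' ->
  size s = size s' ->
  lexle s t -> lexle s' t' -> addS s s' = addS t t' -> s = t.
Proof.
elim: s t s' t' => [|x s IH] [|y t] [|x' s'] [|y' t'] //= [e1] [e2] [e3].
move=> H1 H2 [e4 e5].
have exy : x = y.
  case/orP: H1 => [lt|/andP[/eqP//]].
  case/orP: H2 => [lt'|/andP[/eqP e']]; exfalso; lia.
subst y.
have ex' : x' = y' by lia.
subst y'.
move: H1 H2; rewrite !ltxx !eqxx /= => H1 H2.
by rewrite (IH t s' t' e1 e2 e3 H1 H2 e5).
Qed.

Lemma exmin (T : eqType) (k : T -> seq int) (N : nat) (s : seq T) :
  (forall x, size (k x) = N) -> s != [::] ->
  exists x, x \in s /\ forall y, y \in s -> lexle (k x) (k y).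
Proof.
move=> Hs; elim: s => [|a s IH] // _.
case: (eqVneq s [::]) => [->|ne].
  exists a; split; first by rewrite mem_head.
  move=> y; rewrite inE => /eqP ->.
  by case/orP: (lexle_total (k a) (k a)).
case: (IH ne) => x [xs Hx].
case/orP: (lexle_total (k a) (k x)) => H.
- exists a; split; first by rewrite mem_head.
  move=> y; rewrite inE => /orP[/eqP ->|ys].
    by case/orP: (lexle_total (k a) (k a)).
  by apply: (lexle_trans _ _ H (Hx y ys)); rewrite !Hs.
- exists x; split; first by rewrite inE xs orbT.
  by move=> y; rewrite inE => /orP[/eqP ->|ys]; [|apply: Hx].
Qed.

Section Dot.
Variable n : nat.
Implicit Types u v a b : Lat n.

Lemma dotC u v : dot u v = dot v u.
Proof. by apply: eq_bigr => i _; rewrite mulrC. Qed.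

Lemma dotDr u a b : dot u (a + b) = dot u a + dot u b.
Proof. by rewrite /dot -big_split; apply: eq_bigr => i _; rewrite mxE mulrDr. Qed.

Lemma dotDl u a b : dot (a + b) u = dot a u + dot b u.
Proof. by rewrite dotC dotDr !(dotC u). Qed.

Lemma dotNl u a : dot (- a) u = - dot a u.
Proof. by rewrite /dot -sumrN; apply: eq_bigr => i _; rewrite mxE mulNr. Qed.

Lemma dotZl (c : int) a u : dot (c *: a) u = c * dot a u.
Proof. by rewrite /dot mulr_sumr; apply: eq_bigr => i _; rewrite mxE mulrA. Qed.

Lemma dot0r u : dot u 0 = 0.
Proof. by rewrite /dot big1 // => i _; rewrite mxE mulr0. Qed.

Definition key u e : seq int := dot u e :: [seq e 0 j | j <- enum 'I_n].

Lemma size_key u e : size (key u e) = n.+1.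
Proof. by rewrite /= size_map size_enum_ord. Qed.

Lemma addS_map (T : Type) (r : seq T) (f g : T -> int) :
  addS [seq f j | j <- r] [seq g j | j <- r] = [seq f j + g j | j <- r].
Proof. by elim: r => //= x r ->. Qed.

Lemma keyD u a b : key u (a + b) = addS (key u a) (key u b).
Proof.
rewrite /key /= dotDr addS_map; congr (_ :: _).
by apply: eq_map => j; rewrite mxE.
Qed.

Lemma key_inj u a b : key u a = key u b -> a = b.
Proof.
case=> _ /eq_in_map H; apply/rowP => j.
by have := H j; rewrite mem_enum => ->.
Qed.
End Dot.

Lemma sum_delta (T : eqType) (V : zmodType) (s : seq T) (F : T -> V) e :
  uniq s -> \sum_(x <- s) F x *+ (x == e) = F e *+ (e \in s).
Proof.
elim: s => [|x s IH] /=; first by rewrite big_nil.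
case/andP => xs us; rewrite big_cons IH // in_cons.
case: (eqVneq x e) => [<-|ne]; first by rewrite (negbTE xs) ?eqxx /= addr0.
by rewrite /= add0r.
Qed.

Section LP.
Variables (K : fieldType) (n : nat).
Implicit Types a b c : lpoly K n.

Lemma lmul_coef a b e : (lmul a b)@_e =
  \sum_(x <- msupp a) \sum_(y <- msupp b) (a@_x * b@_y) *+ (x + y == e).
Proof.
rewrite /lmul raddf_sum; apply: eq_bigr => x _.
by rewrite raddf_sum; apply: eq_bigr => y _; exact: mcoeffU.
Qed.

Lemma lmul_supp a b e : e \in msupp (lmul a b) ->
  exists x y, [/\ x \in msupp a, y \in msupp b & e = x + y].
Proof.
move=> H.
have: has (fun x => has (fun y => x + y == e) (msupp b)) (msupp a).
  apply/negPn/negP => /hasPn Hn; move: H.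
  rewrite -mcoeff_neq0 lmul_coef big_seq big1 ?eqxx // => x xa.
  rewrite big_seq big1 // => y yb.
  by have /hasPn H' := Hn x xa; rewrite (negbTE (H' y yb)) mulr0n.
by case/hasP => x xa /hasP [y yb /eqP <-]; exists x, y.
Qed.

Lemma lmul_key a b (u : Lat n) :
  (exists x, x \in msupp a) -> (exists y, y \in msupp b) ->
  exists x y, [/\ x \in msupp a, y \in msupp b, x + y \in msupp (lmul a b),
    (forall x', x' \in msupp a -> dot u x <= dot u x') &
    (forall y', y' \in msupp b -> dot u y <= dot u y')].
Proof.
move=> [x1 x1a] [y1 y1b].
have [|a0 [a0a Ha]] := @exmin _ (key u) n.+1 (msupp a) (@size_key n u).
  by apply/eqP => E; move: x1a; rewrite -[_ \in msupp a]/(_ \in (msupp a : seq _)) E.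
have [|b0 [b0b Hb]] := @exmin _ (key u) n.+1 (msupp b) (@size_key n u).
  by apply/eqP => E; move: y1b; rewrite -[_ \in msupp b]/(_ \in (msupp b : seq _)) E.
have hd s t x y : lexle (x :: s) (y :: t) -> x <= y.
  by case/orP => [/ltW //|/andP[/eqP -> _]].
exists a0, b0; split => //; last first.
- by move=> y' /Hb /hd.
- by move=> x' /Ha /hd.
rewrite -mcoeff_neq0 lmul_coef.
rewrite (eq_big_seq (fun x => (a@_x * b@_b0) *+ (x == a0))); last first.
  move=> x xa; case: (eqVneq x a0) => [->|ne].
    rewrite (eq_big_seq (fun y => (a@_a0 * b@_y) *+ (y == b0))); last first.
      by move=> y _; rewrite (inj_eq (addrI a0)).
    by rewrite sum_delta ?fset_uniq // b0b.
  rewrite big1_seq // => y /andP[_ yb].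
  case: eqP => // E; exfalso; move/eqP: ne; apply.
  apply: (@key_inj n u); symmetry.
  apply: (lexle_sum _ _ _ (Ha x xa) (Hb y yb)); rewrite ?size_key //.
  by rewrite -!keyD E.
rewrite sum_delta ?fset_uniq // a0a mulr1n mulf_neq0 //.
  by rewrite mcoeff_neq0.
by rewrite mcoeff_neq0.
Qed.

Lemma lone_supp e : e \in msupp (lone K n) -> e = 0.
Proof. by rewrite /lone msuppU oner_eq0 inE => /eqP. Qed.

Lemma lone_supp0 : (0 : Lat n) \in msupp (lone K n).
Proof. by rewrite /lone msuppU oner_eq0 inE. Qed.

End LP.

Section Pow.
Variables (K : fieldType) (n : nat) (g : lpoly K n).

Lemma lpowS k : lpow g k.+1 = lmul g (lpow g k).
Proof. by []. Qed.

Lemma lpow_closed (P : pred (Lat n)) : P 0 -> (forall x y, P x -> P y -> P (x + y)) ->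
  (forall q, q \in msupp g -> P q) -> forall k e, e \in msupp (lpow g k) -> P e.
Proof.
move=> P0 PD Pg; elim=> [|k IH] e.
  by move/lone_supp ->.
by rewrite lpowS => /lmul_supp [x [y [xg yk ->]]]; apply: PD; [apply: Pg|apply: IH].
Qed.

Hypothesis Hg : exists q, q \in msupp g.

Lemma lpow_ne k : exists e, e \in msupp (lpow g k).
Proof.
elim: k => [|k IH]; first by exists 0; apply: lone_supp0.
have [x [y [_ _ H _ _]]] := lmul_key 0 Hg IH.
by exists (x + y); rewrite lpowS.
Qed.

Variables (u : Lat n) (nu : int).
Hypothesis Hlb : forall q, q \in msupp g -> nu <= dot u q.
Hypothesis Hat : exists2 q, q \in msupp g & dot u q = nu.

Lemma lpow_lb k e : e \in msupp (lpow g k) -> nu * k%:Z <= dot u e.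
Proof.
elim: k e => [|k IH] e.
  by move/lone_supp ->; rewrite dot0r mulr0.
rewrite lpowS => /lmul_supp [x [y [xg yk ->]]].
rewrite dotDr intS mulrDr mulr1.
by apply: lerD; [apply: Hlb|apply: IH].
Qed.

Lemma lpow_att k : exists2 e, e \in msupp (lpow g k) & dot u e = nu * k%:Z.
Proof.
elim: k => [|k [e1 e1k E1]]; first by exists 0; [apply: lone_supp0|rewrite dot0r mulr0].
have [x [y [xg yk H Hx Hy]]] := lmul_key u Hg (ex_intro _ e1 e1k).
exists (x + y); first by rewrite lpowS.
case: Hat => q qg Eq.
have ex : dot u x = nu by apply/eqP; rewrite eq_le Hlb // andbT -Eq Hx.
have ey : dot u y = nu * k%:Z by apply/eqP; rewrite eq_le lpow_lb // andbT -E1 Hy.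
by rewrite dotDr ex ey intS mulrDr mulr1.
Qed.

Lemma lpow_min k x : x \in msupp (lpow g k) ->
  (forall x', x' \in msupp (lpow g k) -> dot u x <= dot u x') -> dot u x = nu * k%:Z.
Proof.
move=> xk Hx; case: (lpow_att k) => e ek E.
by apply/eqP; rewrite eq_le lpow_lb // andbT -E Hx.
Qed.

End Pow.

Section Slice.
Variables (K : fieldType) (n : nat) (m : Mt n) (f : lpoly K n).

Lemma lslice_coef i e : (lslice m f i)@_e = f@_e *+ (phi m e == i).
Proof.
rewrite /lslice raddf_sum.
rewrite (eq_bigr (fun e' => f@_e' *+ (e' == e))); last by move=> e' _; exact: mcoeffU.
rewrite -big_filter sum_delta ?filter_uniq ?fset_uniq // mem_filter.
case: (boolP (e \in msupp f)) => ef; first by rewrite andbT.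
by rewrite mcoeff_outdom // !mul0rn.
Qed.

Lemma lslice_supp i e : e \in msupp (lslice m f i) -> e \in msupp f /\ phi m e = i.
Proof.
rewrite -mcoeff_neq0 lslice_coef.
case: (eqVneq (phi m e) i) => [E|ne]; rewrite ?mulr1n ?mulr0n ?eqxx //.
by rewrite mcoeff_neq0.
Qed.

Lemma lslice_supp' e : e \in msupp f -> e \in msupp (lslice m f (phi m e)).
Proof. by rewrite -!mcoeff_neq0 lslice_coef eqxx mulr1n. Qed.

End Slice.

Section Mut.
Variables (K : fieldType) (n : nat) (m : Mt n) (g f f' : lpoly K n) (h : int -> lpoly K n).
Hypothesis Hpos : forall i : int, 0 <= i -> lslice m f i = lmul (lpow g `|i|%N) (h i).
Hypothesis Hneg : forall i : int, i < 0 -> h i = lmul (lslice m f i) (lpow g `|i|%N).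
Hypothesis Hf' : f' = \sum_(i <- undup [seq phi m e | e <- msupp f]) h i.
Hypothesis Hg : exists q, q \in msupp g.
Hypothesis HgM : forall q, q \in msupp g -> dot m.1 q = 0.

Lemma lpowM k e : e \in msupp (lpow g k) -> dot m.1 e = 0.
Proof.
move=> H; apply/eqP; move: H; apply: (@lpow_closed _ _ g (fun e => dot m.1 e == 0)).
- by rewrite dot0r.
- by move=> x y /eqP hx /eqP hy; rewrite dotDr hx hy addr0.
- by move=> q /HgM ->.
Qed.

Lemma abs_pos (i : int) : 0 <= i -> i = (`|i|%N)%:Z.
Proof. by move=> H; lia. Qed.

Lemma abs_neg (i : int) : i < 0 -> i = - (`|i|%N)%:Z.
Proof. by move=> H; lia. Qed.

Lemma phi_h i e : e \in msupp (h i) -> phi m e = i.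
Proof.
move=> eh; case: (boolP (0 <= i)) => [ge|]; last rewrite -ltNge => lt.
  have Hk := Hpos ge.
  have [x [y [xk yh H _ Hy]]] := lmul_key (- m.1) (lpow_ne Hg `|i|%N) (ex_intro _ e eh).
  have [x' [y' [xk' yh' H' _ Hy']]] := lmul_key m.1 (lpow_ne Hg `|i|%N) (ex_intro _ e eh).
  rewrite -Hk in H H'.
  have [_ P1] := lslice_supp H; have [_ P2] := lslice_supp H'.
  move: P1 P2 (Hy e eh) (Hy' e eh) (lpowM xk) (lpowM xk').
  rewrite /phi !dotDr !dotNl; lia.
move: eh; rewrite (Hneg lt) => /lmul_supp [x [y [xs yk ->]]].
have [_ P] := lslice_supp xs.
move: P (lpowM yk); rewrite /phi !dotDr; lia.
Qed.

Lemma f'_supp e : e \in msupp f' -> exists i, e \in msupp (h i).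
Proof.
move=> H.
have: has (fun i => e \in msupp (h i)) (undup [seq phi m e | e <- msupp f]).
  apply/negPn/negP => /hasPn Hn; move: H.
  rewrite -mcoeff_neq0 Hf' raddf_sum big_seq big1 ?eqxx // => i il.
  by apply: mcoeff_outdom; apply: Hn.
by case/hasP => i _ ?; exists i.
Qed.

Lemma h_supp_f' i e : i \in undup [seq phi m e | e <- msupp f] ->
  e \in msupp (h i) -> e \in msupp f'.
Proof.
move=> il eh; rewrite -mcoeff_neq0 Hf' raddf_sum.
rewrite (eq_bigr (fun j => (h i)@_e *+ (j == i))); last first.
  move=> j _; case: (eqVneq j i) => [->//|ne]; rewrite mulr0n.
  apply: mcoeff_outdom; apply/negP => ej.
  by move: ne; rewrite -(phi_h ej) (phi_h eh) eqxx.
by rewrite sum_delta ?undup_uniq // il mulr1n mcoeff_neq0.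
Qed.

Variables (c : Lat n) (d nu : int).
Hypothesis Hlb : forall q, q \in msupp g -> nu <= dot c q.
Hypothesis Hat : exists2 q, q \in msupp g & dot c q = nu.

Lemma dir1 : (forall p, p \in msupp f -> 0 <= dot c p + d) ->
  forall e, e \in msupp f' -> 0 <= dot c e + d + nu * phi m e.
Proof.
move=> Hf e /f'_supp [i eh]; rewrite (phi_h eh).
case: (boolP (0 <= i)) => [ge|]; last rewrite -ltNge => lt.
  have Hk := Hpos ge.
  have [x [y [xk yh H Hxm Hy]]] := lmul_key c (lpow_ne Hg `|i|%N) (ex_intro _ e eh).
  have Hx := lpow_min Hg Hlb Hat xk Hxm.
  rewrite -Hk in H; have [Hs _] := lslice_supp H.
  move: (Hf _ Hs) (Hy e eh); rewrite dotDr Hx.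
  have -> : nu * i = nu * (`|i|%N)%:Z by rewrite {1}(abs_pos ge).
  lia.
move: eh; rewrite (Hneg lt) => /lmul_supp [x [y [xs yk ->]]].
have [Hs _] := lslice_supp xs.
move: (Hf _ Hs) (lpow_lb Hlb yk); rewrite dotDr.
have -> : nu * i = - (nu * (`|i|%N)%:Z) by rewrite {1}(abs_neg lt) mulrN.
lia.
Qed.

Lemma dir2 : (forall e, e \in msupp f' -> 0 <= dot c e + d) ->
  forall p, p \in msupp f -> 0 <= dot c p + d - nu * phi m p.
Proof.
move=> Hf p pf; set i := phi m p.
have ps : p \in msupp (lslice m f i) by apply: lslice_supp'.
have il : i \in undup [seq phi m e | e <- msupp f] by rewrite mem_undup map_f.
case: (boolP (0 <= i)) => [ge|]; last rewrite -ltNge => lt.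
  move: ps; rewrite (Hpos ge) => /lmul_supp [x [y [xk yh E]]].
  move: (Hf _ (h_supp_f' il yh)) (lpow_lb Hlb xk); rewrite E dotDr.
  have -> : nu * i = nu * (`|i|%N)%:Z by rewrite {1}(abs_pos ge).
  lia.
have [x [y [xs yk H Hxm Hym]]] := lmul_key c (ex_intro _ p ps) (lpow_ne Hg `|i|%N).
have Hy := lpow_min Hg Hlb Hat yk Hym.
rewrite -(Hneg lt) in H.
move: (Hf _ (h_supp_f' il H)) (Hxm p ps); rewrite dotDr Hy.
have -> : nu * i = - (nu * (`|i|%N)%:Z) by rewrite {1}(abs_neg lt) mulrN.
lia.
Qed.
End Mut.

Section Real.
Variables (R : realType) (n : nat).

Lemma dotR_emb (u v : Lat n) : dotR u (emb R v) = (dot u v)%:~R.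
Proof.
rewrite /dotR /dot rmorph_sum; apply: eq_bigr => i _.
by rewrite mxE -intrM.
Qed.

Lemma dotR_sum (u : Lat n) k (l : 'I_k -> R) (w : 'I_k -> 'rV[R]_n) :
  dotR u (\sum_j l j *: w j) = \sum_j l j * dotR u (w j).
Proof.
rewrite /dotR.
under eq_bigr do rewrite summxE mulr_sumr.
rewrite exchange_big; apply: eq_bigr => j _.
rewrite mulr_sumr; apply: eq_bigr => i _.
by rewrite mxE mulrCA.
Qed.

Lemma conv_ge (S : seq (Lat n)) (u : Lat n) (cst : R) x :
  (forall s, s \in S -> 0 <= (dot u s)%:~R + cst) -> lconv R S x ->
  0 <= dotR u x + cst.
Proof.
move=> HS [lam [H0 [H1 ->]]].
rewrite dotR_sum -[cst in X in _ <= X]mul1r -H1 mulr_suml -big_split sumr_ge0 //.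
move=> j _; change (0 <= lam j * dotR u [seq emb R v | v <- S]`_j + lam j * cst).
rewrite -mulrDr mulr_ge0 //.
have jS : (j < size S)%N by rewrite -(size_map (@emb R n)).
by rewrite (nth_map 0) // dotR_emb; apply: HS; rewrite mem_nth.
Qed.

Lemma emb_lconv (S : seq (Lat n)) v : v \in S -> lconv R S (emb R v).
Proof.
move=> vS.
have jS : (index v S < size [seq emb R v | v <- S])%N by rewrite size_map index_mem.
pose j0 := Ordinal jS.
exists (fun j => (j == j0)%:R); split; first by move=> j; rewrite ler0n.
split.
  by rewrite (bigD1 j0) //= eqxx big1 ?addr0 // => j /negbTE ->.
rewrite (bigD1 j0) //= eqxx scale1r big1 ?addr0; last first.
  by move=> j /negbTE ->; rewrite scale0r.
by rewrite (nth_map 0) ?nth_index ?index_mem.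
Qed.

Lemma lconv_nil x : ~ lconv R ([::] : seq (Lat n)) x.
Proof. by case=> lam [_ [H _]]; move: H; rewrite big_ord0 => /eqP; rewrite eq_sym oner_eq0. Qed.

Lemma SP_pt (A : 'rV[R]_n -> Prop) (H : Mt n) x :
  S_P A H -> A x -> 0 <= dotR H.1 x + H.2%:~R.
Proof.
move=> SA Ax.
have := SA (x, 1); rewrite /= mulr1; apply.
exists 1%N, (fun _ => 1), (fun _ => x); split.
  by move=> j; split.
by rewrite !big_ord1 scale1r.
Qed.

Lemma SP_of_V (V : seq (Lat n)) (H : Mt n) :
  (forall s, s \in V -> 0 <= dot H.1 s + H.2) -> S_P (lconv R V) H.
Proof.
move=> HV w [k [l [v [Hj ->]]]] /=.
rewrite dotR_sum mulr_sumr -big_split sumr_ge0 // => j _.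
change (0 <= l j * dotR H.1 (v j) + H.2%:~R * l j).
rewrite (mulrC _ (l j)) -mulrDr mulr_ge0 //; first by case: (Hj j).
apply: (@conv_ge V); last by case: (Hj j).
by move=> s sV; rewrite -intrD ler0z; apply: HV.
Qed.

Lemma SP_ext (A B : 'rV[R]_n -> Prop) (H : Mt n) :
  (forall x, A x <-> B x) -> S_P A H -> S_P B H.
Proof.
move=> E SA w [k [l [v [Hj Hw]]]]; apply: SA; exists k, l, v; split => // j.
by have [a b] := Hj j; split => //; apply/E.
Qed.

End Real.

Lemma bigmin_facts (T : eqType) (s : seq T) (F : T -> int) (x0 : int) :
  (forall v, v \in s -> \big[Num.min/x0]_(v <- s) F v <= F v) /\
  (\big[Num.min/x0]_(v <- s) F v = x0 \/ exists2 v, v \in s & \big[Num.min/x0]_(v <- s) F v = F v).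
Proof.
elim: s => [|a s [IH1 IH2]]; first by rewrite big_nil; split => //; left.
rewrite big_cons; split.
  move=> v; rewrite inE ge_min => /orP[/eqP ->|vs]; first by rewrite lexx.
  by rewrite IH1 // orbT.
rewrite minEle; case: ifP => _; first by right; exists a => //; rewrite mem_head.
case: IH2 => [->|[v vs ->]]; first by left.
by right; exists v => //; rewrite inE vs orbT.
Qed.

Lemma etaP n (VQ : seq (Lat n)) (c : Lat n) : VQ != [::] ->
  (forall v, v \in VQ -> - Defs.eta VQ c <= dot v c) /\
  exists2 v, v \in VQ & dot v c = - Defs.eta VQ c.
Proof.
rewrite /Defs.eta opprK; case: VQ => [//|v0 s] _ /=.
have [H1 H2] := bigmin_facts (v0 :: s) (fun v => dot v c) (dot v0 c).
split => //; case: H2 => [->|[v vs ->]]; first by exists v0; rewrite ?mem_head.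
by exists v.
Qed.

Lemma eta_shift n (VQ : seq (Lat n)) (c w : Lat n) (t : int) :
  (forall v, v \in VQ -> dot v w = 0) -> Defs.eta VQ (c - t *: w) = Defs.eta VQ c.
Proof.
move=> HV.
have E v : v \in VQ -> dot v (c - t *: w) = dot v c.
  by move=> vV; rewrite dotC dotDl dotNl dotZl dotC (dotC w) HV // mulr0 subr0 dotC.
rewrite /Defs.eta; case: VQ HV E => [|v0 s] HV E /=.
  by rewrite !big_nil !(dotC 0) !dot0r.
rewrite E ?mem_head //; apply: f_equal; apply: eq_big_seq => v vin; exact: E.
Qed.

Lemma newton_pt (R : realType) (K : fieldType) n (f : lpoly K n) e :
  e \in msupp f -> Newton R f (emb R e).
Proof. by move=> ef; apply: emb_lconv; rewrite map_id. Qed.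

Unset Implicit Arguments.
Set Strict Implicit.

Theorem lemma2p10 (R : realType) (K : fieldType) (n : nat)
  (VP VQ : seq 'rV[int]_n) (m : 'rV[int]_n * int) :
  VP != [::] ->
  deformation_pair R VP m VQ ->
  forall f g f' : lpoly K n,
    normalized R f -> normalized R g ->
    (forall x, Newton R f x <-> lconv R VP x) ->
    (forall x, Newton R g x <-> lconv R VQ x) ->
    Mutation m g f f' ->
    (forall h, S_P (lconv R VP) h -> S_P (Newton R f') (xi VQ m h)) /\
    (forall h, S_P (Newton R f') h -> S_P (lconv R VP) (xi VQ (negm m) h)) /\
    (forall h, S_P (lconv R VP) h -> xi VQ (negm m) (xi VQ m h) = h) /\
    (forall h, S_P (Newton R f') h -> xi VQ m (xi VQ (negm m) h) = h).
Proof.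
move=> VPne [VQne [HQ0 _]] f g f' _ _ Ef Eg [h [Hpos [Hneg Hf']]].
have HVQ v : v \in VQ -> dot m.1 v = 0.
  move=> vV; have := HQ0 _ (emb_lconv R vV); rewrite dotR_emb => /eqP.
  by rewrite intr_eq0 => /eqP.
have HgM q : q \in msupp g -> dot m.1 q = 0.
  move=> qg; have /Eg := newton_pt R qg; move/HQ0; rewrite dotR_emb => /eqP.
  by rewrite intr_eq0 => /eqP.
have Hg : exists q, q \in msupp g.
  case: VQ VQne Eg {HVQ HQ0} => [//|v0 s] _ Eg.
  have /Eg H : lconv R (v0 :: s) (emb R v0) by apply: emb_lconv; rewrite mem_head.
  move: H; rewrite /Newton map_id.
  case E: (msupp g : seq _) => [|q s'] H; first by case: (lconv_nil H).
  by exists q; rewrite -[q \in msupp g]/(q \in (msupp g : seq _)) E mem_head.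
have Hlb c q : q \in msupp g -> - Defs.eta VQ c <= dot c q.
  move=> qg; have /Eg := newton_pt R qg => H.
  have := @conv_ge R n VQ c (- (- Defs.eta VQ c)%:~R) _ _ H.
  rewrite dotR_emb -intrB ler0z subr_ge0; apply.
  move=> v vV; rewrite -intrB ler0z subr_ge0 dotC.
  by case: (etaP c VQne) => H1 _; apply: H1.
have Hat c : exists2 q, q \in msupp g & dot c q = - Defs.eta VQ c.
  have [x [_ [xg _ _ Hx _]]] := lmul_key c Hg (ex_intro (fun y => y \in msupp (lone K n)) 0 (@lone_supp0 K n)).
  exists x => //.
  case: (etaP c VQne) => _ [v0 v0V E0].
  have /Eg H := emb_lconv R v0V.
  have := @conv_ge R n [seq e | e <- msupp g] c (- (dot c x)%:~R) _ _ H.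
  rewrite dotR_emb -intrB ler0z subr_ge0 => H'.
  have {}H' : dot c x <= dot c v0.
    apply: H' => s; rewrite map_id => sg.
    by rewrite -intrB ler0z subr_ge0; apply: Hx.
  have H2 := Hlb c x xg; rewrite -E0 (dotC v0) in H2 *; lia.
have HVQ' v : v \in VQ -> dot v m.1 = 0 by move=> vV; rewrite dotC HVQ.
have HVQN v : v \in VQ -> dot v (- m.1) = 0.
  by move=> vV; rewrite dotC dotNl HVQ // oppr0.
split.
  move=> hh Sh; apply: SP_of_V => s; rewrite map_id => sf'.
  have Hf0 : forall p, p \in msupp f -> 0 <= dot hh.1 p + hh.2.
    move=> p pf; have /Ef H := newton_pt R pf; have := SP_pt Sh H.
    by rewrite dotR_emb -intrD ler0z.
  have := dir1 Hpos Hneg Hf' Hg HgM (Hlb hh.1) (Hat hh.1) Hf0 sf'.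
  rewrite /= dotDl dotNl dotZl /phi; lia.
split.
  move=> hh Sh; apply: (@SP_ext R n (Newton R f)); first exact: Ef.
  apply: SP_of_V => p; rewrite map_id => pf.
  have Hf0 : forall e, e \in msupp f' -> 0 <= dot hh.1 e + hh.2.
    move=> e ef; have := SP_pt Sh (newton_pt R ef).
    by rewrite dotR_emb -intrD ler0z.
  have := dir2 Hpos Hneg Hf' Hg HgM (Hlb hh.1) (Hat hh.1) Hf0 pf.
  rewrite /= dotDl dotNl dotZl dotNl /phi; lia.
split.
  move=> [a b] _; rewrite /xi /= eta_shift //.
  by rewrite scalerN opprK subrK mulrN opprK subrK.
move=> [a b] _; rewrite /xi /= eta_shift //.
by rewrite scalerN opprK addrK mulrN opprK addrK.
Qed.
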